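(* Let $n \ge 2$, $G = Q_{4n}$, $k\ge0$, $n_1,m_1,\dots,n_k,m_k$ nonzero integers, and let $\lambda_R \in \mathbb{Z}C_{2n}$ be as defined below. Let $q: \mathbb{Z}C_{2n} \to \mathbb{Z}C_n$ be induced by the quotient $C_{2n} \to C_n$, and let $\bar{\cdot}$ be the involution of $\mathbb{Z}C_{2n}$ with $x^i \mapsto x^{-i}$. Then: (i) the equation $\alpha(xy - 1) + \beta\lambda_R = 1$ has a solution $\alpha, \beta \in \mathbb{Z}G$ if and only if $\delta q(\lambda_R) + \gamma q(\bar\lambda_R) = 1$ has a solution $\delta, \gamma \in \mathbb{Z}C_n$. More specifically, if $\widetilde\delta, \widetilde\gamma \in \mathbb{Z}C_{2n}$ lift such $\delta, \gamma$, then there exists $\varepsilon \in \mathbb{Z}C_{2n}$ with $\widetilde\delta\lambda_R + \widetilde\gamma\bar\lambda_R + \varepsilon(x^n - 1) = 1$, and one may take $\alpha = \varepsilon - \widetilde\gamma\bar\lambda_R + \varepsilon xy$, $\beta = \widetilde\delta + \widetilde\gamma xy$. (ii) If $\delta\lambda_R + \gamma\bar\lambda_R = 1$ for some $\delta, \gamma \in \mathbb{Z}C_{2n}$, then $\alpha = -\gamma\bar\lambda_R$, $\beta = \delta + \gamma xy$ solve $\alpha(xy-1) + \beta\lambda_R = 1$.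
   Context: $G = Q_{4n} = \langle x, y \mid x^n y^{-2}, xyxy^{-1} \rangle$ and $C_{2n} = \langle x \rangle \le G$ (so $\mathbb{Z}C_{2n} \subseteq \mathbb{Z}G$). With $n_{k+1} = 1-\sum_{i=1}^k n_i$, $m_{k+1} = 1-\sum_{i=1}^k m_i$, set $\lambda_R = \sum_{i=1}^{k+1} x^{\sum_{j=1}^{i-1}(n_j - m_j)} \sigma(n_i)$, where $\sigma(r) = 1 + x + \dots + x^{r-1}$ for $r>0$, $\sigma(0) = 0$, $\sigma(r) = -x^r(1 + \dots + x^{|r|-1})$ for $r<0$. *)

(* Defs.v *)
From HB Require Import structures.
From mathcomp Require Import all_boot all_order all_algebra all_fingroup.
Set Implicit Arguments. Unset Strict Implicit. Unset Printing Implicit Defensive.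
Import GRing.Theory Num.Theory.

(* Integral group ring Z[T] of a finite group T, modelled as {ffun T -> int}.
   Addition/subtraction/sums are the pointwise ones of {ffun T -> int};
   multiplication is convolution [gr_mul]; the unit is [gr_one].
   WARNING: never use the pointwise ring product / 1 of {ffun _ -> int}. *)
Section GroupRing.
Variable T : finGroupType.

Definition gr_mul (f g : {ffun T -> int}) : {ffun T -> int} :=
  [ffun z => \sum_(u : T) f u * g (u^-1 * z)%g]%R.

Definition gr_of (u : T) : {ffun T -> int} := [ffun z => Posz ((z == u) : nat)].

Definition gr_one : {ffun T -> int} := gr_of 1%g.

(* f lies in Z[A] (support contained in A) *)
Definition supp_in (A : {set T}) (f : {ffun T -> int}) : Prop :=
  forall u, u \notin A -> f u = 0%R.

(* the involution u |-> u^-1 (on Z C_{2n} this is x^i |-> x^-i) *)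
Definition gr_bar (f : {ffun T -> int}) : {ffun T -> int} := [ffun u => f (u^-1)%g].

Definition gpow (u : T) (z : int) : T :=
  match z with Posz m => (u ^+ m)%g | Negz m => ((u ^+ m.+1)^-1)%g end.

Definition gr_sigma (x : T) (r : int) : {ffun T -> int} :=
  if (0 <= r)%R then (\sum_(i < `|r|%N) gr_of (x ^+ i)%g)%R
  else (- gr_mul (gr_of (gpow x r)) (\sum_(i < `|r|%N) gr_of (x ^+ i)%g))%R.

(* lambda_R for n_1..n_k = ns, m_1..m_k = ms (n_{k+1}, m_{k+1} appended) *)
Definition ext_seq (s : seq int) : seq int := rcons s (1 - \sum_(a <- s) a)%R.

Definition lambdaR (x : T) (ns ms : seq int) : {ffun T -> int} :=
  (\sum_(i < (size ns).+1)
     gr_mul (gr_of (gpow x (\sum_(j < i) (nth 0 (ext_seq ns) j - nth 0 (ext_seq ms) j))))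
            (gr_sigma x (nth 0 (ext_seq ns) i)))%R.

End GroupRing.

Definition gr_quo (T : finGroupType) (x : T) (H : {group T}) (f : {ffun T -> int})
  : {ffun coset_of H -> int} :=
  [ffun c => \sum_(u in <[x]>%g | coset H u == c) f u]%R.

(* Main.v *)
Require Import Defs.
From HB Require Import structures.
From mathcomp Require Import all_boot all_order all_algebra all_fingroup.
From mathcomp Require Import cyclic zify ring.
Import GRing.Theory Num.Theory.

Module Aux.
Set Implicit Arguments. Unset Strict Implicit. Unset Printing Implicit Defensive.

Section GR.
Variable T : finGroupType.
Local Open Scope ring_scope.
Implicit Types (f g h : {ffun T -> int}) (a b u v z : T).

Lemma gr_mulE f g z : gr_mul f g z = \sum_u f u * g (u^-1 * z)%g.
Proof. by rewrite ffunE. Qed.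

Lemma gr_ofE a z : gr_of a z = ((z == a) : nat)%:Z.
Proof. by rewrite ffunE. Qed.

Lemma gr_mul_ofl a f : gr_mul (gr_of a) f = [ffun z => f (a^-1 * z)%g].
Proof.
apply/ffunP=> z; rewrite !ffunE (bigD1 a) //= big1 ?addr0.
  by rewrite ffunE eqxx mul1r.
by move=> u /negbTE ua; rewrite ffunE ua mul0r.
Qed.

Lemma gr_mul_ofr a f : gr_mul f (gr_of a) = [ffun z => f (z * a^-1)%g].
Proof.
apply/ffunP=> z; rewrite !ffunE (bigD1 (z * a^-1)%g) //= big1 ?addr0.
  by rewrite ffunE invMg invgK mulgKV eqxx mulr1.
move=> u ua; rewrite ffunE; case: eqP => [e|]; last by rewrite mulr0.
by case/eqP: ua; rewrite -e invMg invgK mulKVg.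
Qed.

Lemma gr_of_mul a b : gr_mul (gr_of a) (gr_of b) = gr_of (a * b)%g.
Proof.
apply/ffunP=> z; rewrite gr_mul_ofl !ffunE; congr (Posz (nat_of_bool _)).
by apply/eqP/eqP=> [<-|->]; rewrite ?mulKVg ?mulKg.
Qed.

Lemma gr_mul1l f : gr_mul (gr_one T) f = f.
Proof. by apply/ffunP=> z; rewrite gr_mul_ofl ffunE invg1 mul1g. Qed.

Lemma gr_mul1r f : gr_mul f (gr_one T) = f.
Proof. by apply/ffunP=> z; rewrite gr_mul_ofr ffunE invg1 mulg1. Qed.

Lemma gr_mulDl f g h : gr_mul (f + g) h = gr_mul f h + gr_mul g h.
Proof.
by apply/ffunP=> z; rewrite !ffunE -big_split; apply: eq_bigr => u _; rewrite !ffunE mulrDl.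
Qed.

Lemma gr_mulDr f g h : gr_mul f (g + h) = gr_mul f g + gr_mul f h.
Proof.
by apply/ffunP=> z; rewrite !ffunE -big_split; apply: eq_bigr => u _; rewrite !ffunE mulrDr.
Qed.

Lemma gr_mulNl f g : gr_mul (- f) g = - gr_mul f g.
Proof.
apply/ffunP=> z; rewrite !ffunE -sumrN; apply: eq_bigr => u _; by rewrite !ffunE mulNr.
Qed.

Lemma gr_mulNr f g : gr_mul f (- g) = - gr_mul f g.
Proof.
apply/ffunP=> z; rewrite !ffunE -sumrN; apply: eq_bigr => u _; by rewrite !ffunE mulrN.
Qed.

Lemma gr_mulBl f g h : gr_mul (f - g) h = gr_mul f h - gr_mul g h.
Proof. by rewrite gr_mulDl gr_mulNl. Qed.

Lemma gr_mulBr f g h : gr_mul f (g - h) = gr_mul f g - gr_mul f h.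
Proof. by rewrite gr_mulDr gr_mulNr. Qed.

Lemma gr_mul0l f : gr_mul 0 f = 0.
Proof. by apply/ffunP=> z; rewrite !ffunE big1 // => u _; rewrite ffunE mul0r. Qed.

Lemma gr_mul0r f : gr_mul f 0 = 0.
Proof. by apply/ffunP=> z; rewrite !ffunE big1 // => u _; rewrite ffunE mulr0. Qed.

Lemma gr_mulA f g h : gr_mul f (gr_mul g h) = gr_mul (gr_mul f g) h.
Proof.
apply/ffunP=> z; rewrite !ffunE.
under [RHS]eq_bigr do rewrite ffunE mulr_suml.
rewrite exchange_big /=; apply: eq_bigr => v _.
rewrite ffunE mulr_sumr [RHS](reindex_inj (mulgI v)) /=.
by apply: eq_bigr => w _; rewrite mulKg mulrA invMg mulgA.
Qed.

Variable A : {group T}.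

Lemma supp0 : supp_in A 0.
Proof. by move=> u _; rewrite ffunE. Qed.

Lemma suppD f g : supp_in A f -> supp_in A g -> supp_in A (f + g).
Proof. by move=> sf sg u uA; rewrite ffunE sf // sg // addr0. Qed.

Lemma suppN f : supp_in A f -> supp_in A (- f).
Proof. by move=> sf u uA; rewrite ffunE sf // oppr0. Qed.

Lemma suppB f g : supp_in A f -> supp_in A g -> supp_in A (f - g).
Proof. by move=> sf sg; apply: suppD => //; apply: suppN. Qed.

Lemma supp_of a : a \in A -> supp_in A (gr_of a).
Proof. by move=> aA u uA; rewrite ffunE; case: eqP => // e; rewrite e aA in uA. Qed.

Lemma supp_one : supp_in A (gr_one T).
Proof. exact/supp_of/group1. Qed.

Lemma supp_mul f g : supp_in A f -> supp_in A g -> supp_in A (gr_mul f g).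
Proof.
move=> sf sg z zA; rewrite ffunE big1 // => u _.
have [uA|uA] := boolP (u \in A); last by rewrite sf ?mul0r.
by rewrite sg ?mulr0 // groupMl ?groupV.
Qed.

Lemma supp_bar f : supp_in A f -> supp_in A (gr_bar f).
Proof. by move=> sf u uA; rewrite ffunE sf // groupV. Qed.

Lemma supp_sum (I : Type) (r : seq I) (P : pred I) (F : I -> {ffun T -> int}) :
  (forall i, supp_in A (F i)) -> supp_in A (\sum_(i <- r | P i) F i).
Proof.
move=> sF; elim/big_rec: _ => [|i x _ sx]; [exact: supp0| exact: suppD].
Qed.

Lemma gr_mulC f g : abelian A -> supp_in A f -> supp_in A g -> gr_mul f g = gr_mul g f.
Proof.
move=> abA sf sg; apply/ffunP=> z; rewrite !ffunE.
have inj : injective (fun u => z * u^-1)%g.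
  by move=> u1 u2 /mulgI /invg_inj.
rewrite [RHS](reindex_inj inj) /=; apply: eq_bigr => u _.
rewrite invMg invgK mulgKV mulrC.
have [uA|uA] := boolP (u \in A); last by rewrite sf ?mulr0.
have [zA|zA] := boolP (z \in A).
  suff -> : (z * u^-1 = u^-1 * z)%g by [].
  by apply: (centsP abA) => //; rewrite groupV.
rewrite !sg ?mul0r //; first by rewrite groupMr ?groupV.
by rewrite groupMl ?groupV.
Qed.

End GR.


Section Quo.
Variables (T : finGroupType) (x : T) (H : {group T}).
Hypothesis HX : H \subset <[x]>%g.
Local Open Scope ring_scope.
Implicit Types (f g : {ffun T -> int}).
Local Notation q := (gr_quo x H).

Lemma XN : (<[x]> \subset 'N(H))%g.
Proof. apply: cents_norm; apply: subset_trans (cycle_abelian x) _; exact: centS. Qed.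

Lemma XNu u : u \in <[x]>%g -> u \in 'N(H)%g.
Proof. by move=> uX; apply: (subsetP XN). Qed.

Lemma quoE f c : q f c = \sum_(u in <[x]>%g | coset H u == c) f u.
Proof. by rewrite ffunE. Qed.

Lemma quoD f g : q (f + g) = q f + q g.
Proof.
apply/ffunP=> c; rewrite !ffunE -big_split; apply: eq_bigr => u _; by rewrite ffunE.
Qed.

Lemma quoN f : q (- f) = - q f.
Proof.
apply/ffunP=> c; rewrite !ffunE -sumrN; apply: eq_bigr => u _; by rewrite ffunE.
Qed.

Lemma quoB f g : q (f - g) = q f - q g.
Proof. by rewrite quoD quoN. Qed.

Lemma quo_of u : u \in <[x]>%g -> q (gr_of u) = gr_of (coset H u).
Proof.
move=> uX; apply/ffunP=> c; rewrite !ffunE.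
have [e|ne] := eqVneq c (coset H u).
  rewrite (bigD1 u) /=; last by rewrite uX e eqxx.
  rewrite ffunE eqxx big1 ?addr0 // => v /andP[_ /negbTE vu].
  by rewrite ffunE vu.
rewrite big1 // => v /andP[_ /eqP e]; rewrite ffunE; case: eqP => // vu.
by case/eqP: ne; rewrite -e vu.
Qed.

Lemma quo_one : q (gr_one T) = gr_one _.
Proof. by rewrite /gr_one quo_of ?group1 // morph1. Qed.

Lemma quo_supp f : supp_in (<[x]> / H)%g (q f).
Proof.
move=> c cX; rewrite ffunE big1 // => u /andP[uX /eqP e].
by rewrite -e mem_quotient in cX.
Qed.

Lemma quo_mul f g : supp_in <[x]>%g f -> supp_in <[x]>%g g ->
  q (gr_mul f g) = gr_mul (q f) (q g).
Proof.
move=> sf sg; apply/ffunP=> c; rewrite !ffunE.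
have -> : \sum_(z in <[x]>%g | coset H z == c) gr_mul f g z =
          \sum_(z in <[x]>%g | coset H z == c) \sum_(u in <[x]>%g) f u * g (u^-1 * z)%g.
  apply: eq_bigr => z _; rewrite ffunE [LHS](bigID (mem <[x]>%g)) /=.
  by rewrite [X in _ + X]big1 ?addr0 // => u /negP uX; rewrite sf ?mul0r //; apply/negP.
rewrite exchange_big /=.
have -> : \sum_d q f d * q g (d^-1 * c)%g =
   \sum_d \sum_(u in <[x]>%g | coset H u == d)
      f u * \sum_(w in <[x]>%g | coset H w == ((coset H u)^-1 * c)%g) g w.
  apply: eq_bigr => d _; rewrite ffunE mulr_suml.
  by apply: eq_bigr => u /andP[uX /eqP e]; rewrite -e ffunE.
rewrite -(partition_big (coset H) predT) //=.
apply: eq_bigr => u uX; rewrite mulr_sumr.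
rewrite (reindex_inj (mulgI u)) /=.
apply: eq_big => [w|w _]; last by rewrite mulKg.
have [wX|wX] := boolP (w \in <[x]>%g).
  rewrite groupMl // wX /= morphM ?(XNu uX) ?(XNu wX) //.
  apply/eqP/eqP => [e|e]; first by rewrite -e mulKg.
  by change (coset H u * coset H w = c)%g; rewrite e mulKVg.
by rewrite (groupMl _ uX) (negbTE wX).
Qed.

End Quo.


Section Q4n.
Variables (gT : finGroupType) (n : nat) (x y : gT).
Hypotheses (n2 : (2 <= n)%N) (card : #|[set: gT]| = (4 * n)%N)
  (gen : <<[set x; y]>>%g = [set: gT]) (hn : (x ^+ n = y ^+ 2)%g)
  (hr : (x * y * x * y^-1 = 1)%g).
Local Notation t := (x * y)%g.
Local Notation X := (<[x]>%g).

Lemma e1 : (x * y * x = y)%g.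
Proof. by apply/eqP; rewrite eq_mulgV1 hr. Qed.

Lemma e2 : (x * y = y * x^-1)%g.
Proof. by rewrite -{2}e1 mulgK. Qed.

Lemma G1 : (x ^ t = x^-1)%g.
Proof. by rewrite conjgM [(x ^ x)%g]conjgE mulKg conjgE e2 mulKg. Qed.

Lemma G1' : (x ^ t^-1 = x^-1)%g.
Proof. have h := conjgK t x; rewrite G1 conjVg in h; by apply: invg_inj; rewrite h invgK. Qed.

Lemma G2 : (t * t = x ^+ n)%g.
Proof. by rewrite hn mulgA e1 expgS expg1. Qed.

Lemma Gconj w : w \in X -> (w ^ t = w^-1)%g /\ (w ^ t^-1 = w^-1)%g.
Proof. by case/cycleP=> k ->; rewrite !conjXg G1 G1' expgVn. Qed.

Lemma Gnorm : t \in 'N(X)%g.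
Proof. by apply/normP; rewrite -cycleJ G1 cycleV. Qed.

Lemma G4 g : g \in X \/ (g * t^-1)%g \in X.
Proof.
have : g \in (X * <[t]>)%g.
  rewrite -norm_joinEr ?cycle_subG ?Gnorm //.
  have : g \in <<[set x; y]>>%g by rewrite gen inE.
  apply/subsetP; rewrite gen_subG subUset !sub1set.
  rewrite (subsetP (joing_subl _ _)) ?cycle_id //=.
  set J := (X <*> _)%g.
  have -> : y = (x^-1 * t)%g by rewrite mulKg.
  rewrite groupM //; first by rewrite groupV (subsetP (joing_subl _ _)) ?cycle_id.
  by rewrite (subsetP (joing_subr _ _)) ?cycle_id.
case/mulsgP=> a b aX /cycleP[k ->] ->.
have txn : (t ^+ 2 = x ^+ n)%g by rewrite expgS expg1 G2.
rewrite -(odd_double_half k) addnC expgD -muln2 mulnC expgM txn.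
case: (odd k) => /=; rewrite ?expg0 ?expg1 ?mulg1; last first.
  by left; rewrite groupM // groupX // mem_cycle.
right; rewrite mulgA mulgK.
by rewrite groupM // groupX // mem_cycle.
Qed.

Lemma x2n : (x ^+ (2 * n) = 1)%g.
Proof.
have h1 : ((x ^+ n) ^ t = (x ^+ n)^-1)%g by case: (Gconj (mem_cycle x n)).
have h2 : ((x ^+ n) ^ t = x ^+ n)%g by rewrite -G2 conjgE mulgA mulKg.
rewrite mul2n -addnn expgD.
by apply/eqP; rewrite -eq_invg_mul -h1 h2.
Qed.

Lemma cardG : #|[set: gT]| <= 2 * #[x]%g.
Proof.
have sub : [set: gT] \subset X :|: (X :* t)%g.
  apply/subsetP=> g _; rewrite inE mem_rcoset.
  by case: (G4 g) => -> //; rewrite orbT.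
apply: leq_trans (subset_leq_card sub) _.
by rewrite cardsU card_rcoset mul2n -addnn leq_subr.
Qed.

Lemma ordx : #[x]%g = (2 * n)%N.
Proof.
apply/eqP; rewrite eqn_leq; apply/andP; split.
  by apply: dvdn_leq; [rewrite muln_gt0 /=; apply: leq_trans n2 | rewrite order_dvdn x2n].
have := cardG; rewrite card; lia.
Qed.

Lemma tX : t \notin X.
Proof.
apply/negP=> tXi.
have sub : [set: gT] \subset X.
  apply/subsetP=> g _; case: (G4 g) => // h.
  by rewrite -(mulgKV t g) groupM.
have := subset_leq_card sub; rewrite card -/(order x) ordx.
by rewrite leq_pmul2r ?ltnn //; apply: leq_trans n2.
Qed.

Lemma xnV : ((x ^+ n)^-1 = x ^+ n)%g.
Proof. by apply/eqP; rewrite eq_invg_mul -expgD addnn -mul2n x2n. Qed.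

Lemma xn1 : (x ^+ n != 1)%g.
Proof.
rewrite -(expg0 x) eq_expg_mod_order ordx mod0n modn_small.
  by rewrite -lt0n; apply: leq_trans n2.
by rewrite mul2n -addnn -{1}(addn0 n) ltn_add2l; apply: leq_trans n2.
Qed.

Lemma memH h : h \in <[x ^+ n]>%g -> h = 1%g \/ h = (x ^+ n)%g.
Proof.
case/cyclePmin=> i; rewrite orderXdiv ordx ?dvdn_mull // mulnK; last first.
  by apply: leq_trans n2.
by case: i => [|[|]] // _ ->; [left; rewrite expg0 | right; rewrite expg1].
Qed.

End Q4n.


Ltac zsolve := apply/ffunP => ?; rewrite !ffunE; ring.

Section Main.
Variables (gT : finGroupType) (n : nat) (x y : gT).
Hypotheses (n2 : (2 <= n)%N) (card : #|[set: gT]| = (4 * n)%N)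
  (gen : <<[set x; y]>>%g = [set: gT]) (hn : (x ^+ n = y ^+ 2)%g)
  (hr : (x * y * x * y^-1 = 1)%g).
Local Notation t := (x * y)%g.
Local Notation X := (<[x]>%g).
Local Notation H := (<[x ^+ n]>%G).
Local Notation q := (gr_quo x H).
Local Notation TT := (gr_of (x * y)%g).
Local Open Scope ring_scope.
Implicit Types (f g : {ffun gT -> int}).

Let memH' := memH n2 card gen hn hr.
Let ordx' := ordx n2 card gen hn hr.
Let xnV' := xnV hn hr.
Let x2n' := x2n hn hr.
Let xn1' := xn1 n2 card gen hn hr.
Let tX' := tX n2 card gen hn hr.
Let G4' := G4 gen hn hr.
Let Gconj' := Gconj hr.
Let G2' := G2 hn hr.

Lemma HX : (H \subset X)%g.
Proof. exact: cycleX. Qed.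

Lemma xnX : (x ^+ n \in X)%g.
Proof. exact: mem_cycle. Qed.

Lemma xnH : (x ^+ n \in H)%g.
Proof. exact: cycle_id. Qed.

Lemma pairL f : supp_in X f -> q f = 0 ->
  forall w, w \in X -> f w + f (w * x ^+ n)%g = 0.
Proof.
move=> sf qf w wX.
have := congr1 (fun F : {ffun _ -> int} => F (coset H w)) qf.
rewrite /= quoE ffunE => <-; symmetry.
have wxX : (w * x ^+ n)%g \in X by rewrite groupM ?xnX.
have cw : commute w (x ^+ n)%g by apply: (centsP (cycle_abelian x)) => //; exact: xnX.
rewrite (bigD1 w) /=; last by rewrite wX eqxx.
rewrite (bigD1 (w * x ^+ n)%g) /=; last first.
  rewrite wxX coset_kerr ?xnH // eqxx /=.
  apply/negP=> /eqP e; have : (x ^+ n = 1)%g by apply: (mulgI w); rewrite e mulg1.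
  by move=> e1; move: xn1'; rewrite e1 eqxx.
rewrite big1 ?addr0 // => u /andP[/andP[/andP[uX /eqP e] nuw] nuwx].
have : u \in (H :* w)%g by apply/(rcoset_kercosetP (XNu HX uX) (XNu HX wX)).
rewrite mem_rcoset => /memH' [e1|e1].
  by case/eqP: nuw; rewrite -(mulgKV w u) e1 mul1g.
by case/eqP: nuwx; rewrite -(mulgKV w u) e1 cw.
Qed.

Lemma exL j : (j < 2 * n)%N -> [exists i : 'I_n, (x ^+ j == x ^+ i)%g] = (j < n)%N.
Proof.
move=> jlt; apply/existsP/idP => [[i]|jn]; last by exists (Ordinal jn).
rewrite eq_expg_mod_order ordx' !modn_small //.
  by move/eqP->.
by apply: leq_trans (ltn_ord i) _; lia.
Qed.

Lemma kerL f : supp_in X f -> q f = 0 ->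
  exists eps, supp_in X eps /\ f = gr_mul eps (gr_of (x ^+ n)%g - gr_one gT).
Proof.
move=> sf qf.
have ex0 u : u \notin X -> [exists i : 'I_n, u == x ^+ i]%g = false.
  move=> uX; apply/existsP => [[i /eqP e]].
  by rewrite e mem_cycle in uX.
exists [ffun u => if [exists i : 'I_n, u == x ^+ i]%g then - f u else 0]; split.
  by move=> u uX; rewrite ffunE ex0.
apply/ffunP=> z; rewrite gr_mulBr gr_mul_ofr gr_mul1r !ffunE xnV'.
have [zX|zX] := boolP (z \in X); last first.
  rewrite (sf z zX) (ex0 z zX) subr0 (ex0 (z * x ^+ n)%g) //.
  by rewrite groupMr ?xnX.
case/cyclePmin: zX => j; rewrite ordx' => jlt ->.
rewrite -expgD.
have [jn|jn] := ltnP j n.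
  rewrite (@exL (j + n)) ?(@exL j) //; last by lia.
  by rewrite jn ltnNge leq_addl /= sub0r opprK.
have e : (x ^+ (j + n) = x ^+ (j - n))%g.
  have -> : (j + n = (j - n) + 2 * n)%N by lia.
  by rewrite expgD x2n' mulg1.
rewrite e (@exL (j - n)) ?(@exL j) //; last by lia.
have -> : (j - n < n)%N by lia.
rewrite ltnNge jn /=.
have := pairL sf qf (mem_cycle x (j - n)).
rewrite -expgD subnK // => /eqP; rewrite addrC addr_eq0 => /eqP ->.
by rewrite subr0.
Qed.

Lemma liftL (d : {ffun coset_of H -> int}) : supp_in (X / H)%g d ->
  exists dt, supp_in X dt /\ q dt = d.
Proof.
move=> sd.
exists [ffun u => if (u \in X) && (u == repr (coset H u)) then d (coset H u) else 0].
split; first by move=> u uX; rewrite ffunE (negbTE uX).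
apply/ffunP=> c; have [cX|cX] := boolP (c \in (X / H)%g); last first.
  by rewrite sd // (quo_supp _ cX).
have nHX : (H <| X)%g by rewrite /normal HX XN // HX.
have rX : repr c \in X.
  have : repr c \in (coset H @*^-1 (X / H))%g.
    by rewrite mem_morphpre ?repr_coset_norm //= coset_reprK.
  by rewrite quotientGK.
rewrite quoE (bigD1 (repr c)) /=; last by rewrite rX coset_reprK eqxx.
rewrite ffunE rX coset_reprK eqxx /= big1 ?addr0 // => u /andP[/andP[uX /eqP e] nu].
by rewrite ffunE e (negbTE nu) andbF.
Qed.

Lemma tXr z : z \in X -> (z * t^-1)%g \notin X.
Proof.
move=> zX; apply/negP => h; move/negP: tX'; apply.
by rewrite -groupV -(mulKg z (t^-1)%g) groupM ?groupV.
Qed.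

Lemma Tf f : supp_in X f -> gr_mul TT f = gr_mul (gr_bar f) TT.
Proof.
move=> sf; apply/ffunP=> z; rewrite gr_mul_ofl gr_mul_ofr !ffunE.
have key : ((z * t^-1)^-1 = ((t^-1 * z)^-1) ^ t^-1)%g.
  move: (x * y)%g => s; rewrite conjgE !invMg !invgK !mulgA mulgK //.
rewrite key; set w := (t^-1 * z)%g.
have [wX|wX] := boolP (w \in X).
  by case: (Gconj' (groupVr wX)) => _ ->; rewrite invgK.
rewrite !sf //; apply/negP => h.
have : ((w^-1 ^ t^-1) ^ t)%g \in X by case: (Gconj' h) => -> _; rewrite groupV.
by rewrite conjgKV groupV (negbTE wX).
Qed.

Lemma TTE : gr_mul TT TT = gr_of (x ^+ n)%g.
Proof. by rewrite gr_of_mul G2'. Qed.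

Lemma qh : q (gr_of (x ^+ n)%g) = gr_one _.
Proof. by rewrite quo_of ?HX ?xnX // coset_id ?xnH. Qed.

Lemma decomp f : exists f1 f2, [/\ supp_in X f1, supp_in X f2 & f = f1 + gr_mul f2 TT].
Proof.
exists [ffun u => if u \in X then f u else 0].
exists [ffun u => if u \in X then f (u * t)%g else 0].
split; first by move=> u uX; rewrite ffunE (negbTE uX).
  by move=> u uX; rewrite ffunE (negbTE uX).
apply/ffunP=> z; rewrite gr_mul_ofr !ffunE mulgKV.
have [zX|zX] := boolP (z \in X); first by rewrite (negbTE (tXr zX)) addr0.
by case: (G4' z) => [zX'|->]; [rewrite zX' in zX | rewrite add0r].
Qed.

Lemma proj A B : supp_in X A -> supp_in X B -> A + gr_mul B TT = gr_one gT ->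
  A = gr_one gT /\ B = 0.
Proof.
move=> sA sB e.
have eA : A = gr_one gT.
  apply/ffunP=> z; have [zX|zX] := boolP (z \in X).
    have := congr1 (fun F : {ffun gT -> int} => F z) e.
    by rewrite /= gr_mul_ofr !ffunE (sB _ (tXr zX)) addr0.
  rewrite sA // ffunE; case: eqP => // e1.
  by rewrite e1 group1 in zX.
split=> //; apply/ffunP=> u.
have := congr1 (fun F : {ffun gT -> int} => F (u * t)%g) e.
rewrite /= eA gr_mul_ofr !ffunE mulgK.
have [uX|uX] := boolP (u \in X); last by rewrite sB.
case: eqP => [e1|_]; first by move: tX'; rewrite -(mulKg u t) e1 mulg1 groupV uX.
by rewrite add0r.
Qed.

Lemma part_ii lam : supp_in X lam -> forall delta gamma : {ffun gT -> int},
      supp_in X delta -> supp_in X gamma ->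
      gr_mul delta lam + gr_mul gamma (gr_bar lam) = gr_one gT ->
      gr_mul (- gr_mul gamma (gr_bar lam)) (TT - gr_one gT)
         + gr_mul (delta + gr_mul gamma TT) lam = gr_one gT.
Proof.
move=> slam d g sd sg e.
rewrite gr_mulNl gr_mulBr gr_mul1r gr_mulDl -!gr_mulA (Tf slam) -e.
zsolve.
Qed.

Lemma part_expl lam : supp_in X lam -> forall dt gt : {ffun gT -> int},
      supp_in X dt -> supp_in X gt ->
      gr_mul (q dt) (q lam) + gr_mul (q gt) (q (gr_bar lam)) = gr_one _ ->
      exists eps : {ffun gT -> int},
        supp_in X eps /\
        (gr_mul dt lam + gr_mul gt (gr_bar lam)
           + gr_mul eps (gr_of (x ^+ n)%g - gr_one gT) = gr_one gT) /\
        (gr_mul (eps - gr_mul gt (gr_bar lam) + gr_mul eps TT) (TT - gr_one gT)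
           + gr_mul (dt + gr_mul gt TT) lam = gr_one gT).
Proof.
move=> slam dt gt sdt sgt e.
set f := gr_one gT - (gr_mul dt lam + gr_mul gt (gr_bar lam)).
have sf : supp_in X f.
  by apply: suppB; [exact: supp_one | apply: suppD; apply: supp_mul => //; exact: supp_bar].
have qf : q f = 0.
  rewrite /f quoB quoD !quo_mul ?HX //; last exact: supp_bar.
  by rewrite e quo_one ?HX // subrr.
have [eps [seps ef]] := kerL sf qf.
have e2 : gr_mul dt lam + gr_mul gt (gr_bar lam)
           + gr_mul eps (gr_of (x ^+ n)%g - gr_one gT) = gr_one gT.
  by rewrite -ef /f; zsolve.
exists eps; split => //; split => //.
rewrite !gr_mulDl ?gr_mulBl ?gr_mulNl !gr_mulBr !gr_mul1r -!gr_mulA TTE (Tf slam).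
rewrite -e2 gr_mulBr gr_mul1r.
zsolve.
Qed.

Lemma forward lam : supp_in X lam -> forall alpha beta : {ffun gT -> int},
  gr_mul alpha (TT - gr_one gT) + gr_mul beta lam = gr_one gT ->
  exists delta gamma : {ffun coset_of H -> int},
      supp_in (X / H)%g delta /\ supp_in (X / H)%g gamma /\
      (gr_mul delta (q lam) + gr_mul gamma (q (gr_bar lam)) = gr_one _).
Proof.
move=> slam alpha beta e.
have [a1 [a2 [sa1 sa2 ea]]] := decomp alpha.
have [b1 [b2 [sb1 sb2 eb]]] := decomp beta.
have slb := supp_bar slam.
set A := gr_mul a2 (gr_of (x ^+ n)%g) - a1 + gr_mul b1 lam.
set B := a1 - a2 + gr_mul b2 (gr_bar lam).
have sA : supp_in X A.
  apply: suppD; [apply: suppB => //; apply: supp_mul => //; apply: supp_of; exact: xnX|].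
  exact: supp_mul.
have sB : supp_in X B by apply: suppD; [exact: suppB| exact: supp_mul].
have eAB : A + gr_mul B TT = gr_one gT.
  rewrite -e ea eb /A /B.
  rewrite !gr_mulDl ?gr_mulBl ?gr_mulNl !gr_mulBr !gr_mul1r -!gr_mulA TTE (Tf slam).
  zsolve.
have [eA eB] := proj sA sB eAB.
exists (q b1), (q b2); split; first exact: quo_supp.
split; first exact: quo_supp.
have : q (A + B) = gr_one _ by rewrite eA eB addr0 quo_one ?HX.
rewrite /A /B !quoD ?quoB ?quoN !quo_mul ?HX //; last by apply: supp_of; exact: xnX.
rewrite qh gr_mul1r => <-; zsolve.
Qed.

End Main.

End Aux.
Import Aux.


Lemma gpowX (T : finGroupType) (x : T) (z : int) : gpow x z \in <[x]>%g.
Proof. by case: z => m /=; rewrite ?groupV mem_cycle. Qed.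

Lemma supp_lam (T : finGroupType) (x : T) ns ms : supp_in <[x]>%g (lambdaR x ns ms).
Proof.
apply: supp_sum => i; apply: supp_mul; first by apply: supp_of; exact: gpowX.
rewrite /gr_sigma; case: ifP => _.
  by apply: supp_sum => j; apply/supp_of/mem_cycle.
apply/suppN/supp_mul; first by apply/supp_of/gpowX.
by apply: supp_sum => j; apply/supp_of/mem_cycle.
Qed.

Theorem lemma3p20 (gT : finGroupType) (n : nat) (x y : gT) (ns ms : seq int) :
  (2 <= n)%N ->
  #|[set: gT]| = (4 * n)%N ->
  <<[set x; y]>>%g = [set: gT] ->
  (x ^+ n = y ^+ 2)%g ->
  (x * y * x * y^-1 = 1)%g ->
  size ms = size ns ->
  all (fun a => a != 0%R) ns -> all (fun a => a != 0%R) ms ->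
  let lam := lambdaR x ns ms in
  let H := <[x ^+ n]>%G in
  let xy := gr_of (x * y)%g in
  (* (i), equivalence *)
  ((exists alpha beta : {ffun gT -> int},
      (gr_mul alpha (xy - gr_one gT) + gr_mul beta lam)%R = gr_one gT)
   <->
   (exists delta gamma : {ffun coset_of H -> int},
      supp_in (<[x]> / H)%g delta /\ supp_in (<[x]> / H)%g gamma /\
      (gr_mul delta (gr_quo x H lam) + gr_mul gamma (gr_quo x H (gr_bar lam)))%R
        = gr_one (coset_of H)))
  /\
  (* (i), explicit solution from lifts *)
  (forall dt gt : {ffun gT -> int},
      supp_in <[x]>%g dt -> supp_in <[x]>%g gt ->
      (gr_mul (gr_quo x H dt) (gr_quo x H lam)
         + gr_mul (gr_quo x H gt) (gr_quo x H (gr_bar lam)))%R = gr_one (coset_of H) ->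
      exists eps : {ffun gT -> int},
        supp_in <[x]>%g eps /\
        (gr_mul dt lam + gr_mul gt (gr_bar lam)
           + gr_mul eps (gr_of (x ^+ n)%g - gr_one gT))%R = gr_one gT /\
        (gr_mul (eps - gr_mul gt (gr_bar lam) + gr_mul eps xy) (xy - gr_one gT)
           + gr_mul (dt + gr_mul gt xy) lam)%R = gr_one gT)
  /\
  (* (ii) *)
  (forall delta gamma : {ffun gT -> int},
      supp_in <[x]>%g delta -> supp_in <[x]>%g gamma ->
      (gr_mul delta lam + gr_mul gamma (gr_bar lam))%R = gr_one gT ->
      (gr_mul (- gr_mul gamma (gr_bar lam)) (xy - gr_one gT)
         + gr_mul (delta + gr_mul gamma xy) lam)%R = gr_one gT).
Proof.
move=> n2 card gen hn hr _ _ _ lam H xy.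
have slam : supp_in <[x]>%g lam := @supp_lam _ x ns ms.
split; [split|split].
- by case=> alpha [beta e]; exact: (forward n2 card gen hn hr slam e).
- case=> d [g [sd [sg e]]].
  have [dt [sdt qdt]] := liftL sd.
  have [gt [sgt qgt]] := liftL sg.
  rewrite -qdt -qgt in e.
  have [eps [_ [_ e3]]] := part_expl n2 card gen hn hr slam sdt sgt e.
  by exists (eps - gr_mul gt (gr_bar lam) + gr_mul eps xy)%R, (dt + gr_mul gt xy)%R.
- by move=> dt gt sdt sgt e; exact: (part_expl n2 card gen hn hr slam sdt sgt e).
- by move=> d g sd sg e; exact: (part_ii hr slam sd sg e).
Qed.
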